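(* Let $\varepsilon\in(0,1)$ and let $C=O\left(\frac{1}{\varepsilon}\right)$. Any one-pass streaming algorithm that outputs a $(1+\varepsilon)$-approximation of the number of distinct elements on streams whose frequency vector has $C$ coordinates with frequency more than $1$ must use $\Omega\left(\frac{1}{\varepsilon}\right)$ bits of space.
   Context: Streaming model: a stream of item insertions from the universe $[n]$ defines a frequency vector $f$ ($f_i$ is the number of occurrences of $i$); the number of distinct elements is $F_0=|\{i:f_i\neq 0\}|$. A $(1+\varepsilon)$-approximation to $F_0$ is a value $\hat F$ with $(1-\varepsilon)F_0\le\hat F\le(1+\varepsilon)F_0$, required to hold with constant probability (e.g., at least $\frac23$). *)

(* Defs.v *)
From HB Require Import structures.
From mathcomp Require Import all_boot all_order all_algebra.
Set Implicit Arguments. Unset Strict Implicit. Unset Printing Implicit Defensive.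
Import Order.TTheory GRing.Theory Num.Theory.
Local Open Scope ring_scope.

Definition bstate (s : nat) := {ffun 'I_s -> bool}.

(* A randomized one-pass streaming algorithm over universe [n] = 'I_n,
   with s bits of memory, whose (public) random seed ranges over the
   finite type Omega. *)
Record salg (R : realFieldType) (n s : nat) (Omega : finType) := SAlg {
  init : Omega -> bstate s;
  upd  : Omega -> bstate s -> 'I_n -> bstate s;
  out  : Omega -> bstate s -> R }.

Definition run (R : realFieldType) n s (Omega : finType) (A : salg R n s Omega)
  (w : Omega) (str : seq 'I_n) : bstate s :=
  foldl (upd A w) (init A w) str.

Definition freq n (str : seq 'I_n) (i : 'I_n) : nat := count_mem i str.

Definition F0 n (str : seq 'I_n) : nat := #|[set i : 'I_n | freq str i != 0%N]|.

Definition heavy n (str : seq 'I_n) : nat := #|[set i : 'I_n | 1 < freq str i]|%N.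

Definition is_distr (R : realFieldType) (Omega : finType) (p : Omega -> R) : Prop :=
  (forall w, 0 <= p w) /\ \sum_(w : Omega) p w = 1.

Definition approx (R : realFieldType) (eps : R) (F : nat) (x : R) : bool :=
  ((1 - eps) * F%:R <= x) && (x <= (1 + eps) * F%:R).

Definition succeeds_on (R : realFieldType) n s (Omega : finType)
  (A : salg R n s Omega) (p : Omega -> R) (eps : R) (str : seq 'I_n) : Prop :=
  2 / 3 <= \sum_(w : Omega | approx eps (F0 str) (out A w (run A w str))) p w.

(* Main.v *)
From HB Require Import structures.
From mathcomp Require Import all_boot all_order all_algebra.
Require Import Defs.
From mathcomp Require Import zify ring lra.
Set Implicit Arguments. Unset Strict Implicit.
Import Order.TTheory GRing.Theory Num.Theory.

Definition agree m (x : {ffun 'I_m -> bool}) (T : 'I_m -> bool) : nat :=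
  \sum_(i < m) (x i == T i).

Lemma sum_pow_agree m (T : 'I_m -> bool) :
  \sum_(x : {ffun 'I_m -> bool}) 2 ^ agree x T = 3 ^ m.
Proof.
rewrite /agree.
under eq_bigr => x _ do rewrite expn_sum.
rewrite -(bigA_distr_bigA (fun i b => 2 ^ (b == T i))).
rewrite (eq_bigr (fun _ => 3)); last first.
  by move=> i _; rewrite big_bool /=; case: (T i).
by rewrite prod_nat_const card_ord.
Qed.

Lemma agree_le m x T : agree (m:=m) x T <= m.
Proof.
rewrite /agree -[X in _ <= X]card_ord -sum1_card.
by apply: leq_sum => i _; case: (_ == _).
Qed.

Lemma tail_bound m a (T : 'I_m -> bool) :
  2 ^ a.+1 * \sum_(x : {ffun 'I_m -> bool}) (a < agree x T) <= 3 ^ m.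
Proof.
rewrite -(sum_pow_agree T) big_distrr /=.
apply: leq_sum => x _.
case: ltnP => h /=; last by rewrite muln0.
by rewrite muln1 leq_exp2l.
Qed.

Lemma comb m a (S : finType) (D : S -> 'I_m -> bool)
   (g : {ffun 'I_m -> bool} -> S) :
  2 ^ a.+1 * \sum_x agree x (D (g x)) <= 2 ^ a.+1 * a * 2 ^ m + m * #|S| * 3 ^ m.
Proof.
have h1 x : agree x (D (g x)) <= a + m * \sum_(σ : S) (a < agree x (D σ)).
  case: (ltnP a (agree x (D (g x)))) => h.
    rewrite (bigD1 (g x)) //= h; set t := (\sum_(_ | _) _).
    apply: leq_trans (agree_le _ _) _.
    by rewrite mulnDr muln1 addnCA leq_addr.
  by apply: leq_trans h (leq_addr _ _).
have h2 : \sum_x agree x (D (g x)) <= a * 2 ^ m + m * \sum_(σ : S) \sum_x (a < agree x (D σ)).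
  have := leq_sum _ (fun x (_ : true) => h1 x).
  move=> H; apply: (leq_trans (H _)).
  idtac.
  rewrite big_split /= sum_nat_const card_ffun !card_ord card_bool.
  rewrite exchange_big /= -big_distrr /= mulnC.
  by [].
rewrite -mulnA; apply: leq_trans (leq_mul (leqnn _) h2) _.
rewrite mulnDr leq_add2l mulnCA -mulnA leq_mul2l; apply/orP; right.
rewrite big_distrr /= -sum1_card big_distrl /=.
by apply: leq_sum => σ _; rewrite mul1n tail_bound.
Qed.
Definition item n m (x : {ffun 'I_m -> bool}) (j : 'I_m) : 'I_n.+1 :=
  inord (if x j then (j : nat) else (m + j)%N).
Definition alice n m (x : {ffun 'I_m -> bool}) := [seq item n x j | j <- enum 'I_m].
Definition bob n m (i : 'I_m) : 'I_n.+1 := inord i.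
Definition strm n m (x : {ffun 'I_m -> bool}) (i : 'I_m) := alice n x ++ [:: bob n i].

Lemma val_item n m x j : (2 * m <= n.+1)%N ->
  (item n (m:=m) x j : nat) = if x j then (j : nat) else (m + j)%N.
Proof.
move=> hm; rewrite /item inordK //; have := ltn_ord j.
case: (x j) => /=; lia.
Qed.

Lemma val_bob n m (i : 'I_m) : (2 * m <= n.+1)%N -> (bob n i : nat) = i.
Proof. move=> hm; rewrite /bob inordK //; have := ltn_ord i; lia. Qed.

Lemma item_inj n m x : (2 * m <= n.+1)%N -> injective (item n (m:=m) x).
Proof.
move=> hm j k /(congr1 val) /=; rewrite !val_item //.
have := ltn_ord j; have := ltn_ord k.
case: (x j); case: (x k) => /= hk hj e; apply: val_inj => /=; lia.
Qed.

Lemma alice_uniq n m x : (2 * m <= n.+1)%N -> uniq (alice n (m:=m) x).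
Proof. by move=> hm; rewrite map_inj_uniq ?enum_uniq //; apply: item_inj. Qed.

Lemma size_alice n m x : size (alice n (m:=m) x) = m.
Proof. by rewrite size_map size_enum_ord. Qed.

Lemma bob_in n m x i : (2 * m <= n.+1)%N -> (bob n i \in alice n (m:=m) x) = x i.
Proof.
move=> hm; apply/idP/idP.
  case/mapP => j _ /(congr1 val) /=; rewrite val_bob // val_item //.
  have := ltn_ord i; case: (boolP (x j)) => xj /=.
    by move=> _ e; have -> : i = j by apply: val_inj.
  lia.
move=> xi; apply/mapP; exists i; first by rewrite mem_enum.
by apply: val_inj => /=; rewrite val_bob // val_item // xi.
Qed.

Lemma F0_seq n (s : seq 'I_n) : F0 s = #|s|.
Proof.
rewrite /F0 -cardsE; apply: eq_card => k; rewrite !inE /freq.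
by rewrite -lt0n -has_count has_pred1.
Qed.

Lemma F0_strm n m x i : (2 * m <= n.+1)%N ->
  F0 (strm n (m:=m) x i) = (m + ~~ x i)%N.
Proof.
move=> hm; rewrite F0_seq /strm.
case: (boolP (x i)) => xi /=.
  rewrite addn0; transitivity #|alice n x|; last by rewrite (card_uniqP (alice_uniq x hm)) size_alice.
  apply: eq_card => k; rewrite mem_cat inE.
  by case: (boolP (k == bob n i)) => [/eqP ->|]; rewrite ?orbF ?orbT ?bob_in.
have u : uniq (alice n x ++ [:: bob n i]).
  by rewrite cat_uniq alice_uniq //= orbF bob_in // andbT.
by rewrite (card_uniqP u) size_cat size_alice addn1.
Qed.

Lemma heavy_strm n m x i : (2 * m <= n.+1)%N ->
  (heavy (strm n (m:=m) x i) <= 1)%N.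
Proof.
move=> hm; rewrite /heavy; apply: (@leq_trans #|[set bob n i]|); last by rewrite cards1.
apply: subset_leq_card.
apply/subsetP => k; rewrite !inE /freq /strm count_cat /=.
rewrite count_uniq_mem ?alice_uniq //.
by rewrite eq_sym; case: (k == bob n i); case: (k \in alice n x).
Qed.
Lemma arith_core (Q E1 E2 E3 T : nat) : (0 < Q)%N ->
  (2 * (E1 * (40 * Q)) * E2 <= 3 * (E2 * (25 * Q) * E1 + 40 * Q * T * E3))%N ->
  (E1 * E2 <= 24 * (T * E3))%N.
Proof.
move=> hQ h.
have e1 : (2 * (E1 * (40 * Q)) * E2 = 80 * Q * (E1 * E2))%N by ring.
have e2 : (3 * (E2 * (25 * Q) * E1 + 40 * Q * T * E3) = 75 * Q * (E1 * E2) + 120 * Q * (T * E3))%N by ring.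
rewrite e1 e2 in h; clear e1 e2.
move: h; generalize (E1 * E2)%N (T * E3)%N => X Y h.
nia.
Qed.
Lemma pow35 k : (3 ^ (5 * k) <= 2 ^ (8 * k))%N.
Proof. rewrite !expnM; case: k => [|k] //; by rewrite leq_exp2r. Qed.
Lemma arith q s :
  (2 * (2 ^ (40 * q) * (40 * q)) * 2 ^ (25 * q).+1 <=
   3 * (2 ^ (25 * q).+1 * (25 * q) * 2 ^ (40 * q) + 40 * q * #|{ffun 'I_s -> bool}| * 3 ^ (40 * q)))%N ->
  (q <= s + 4)%N.
Proof.
rewrite card_ffun card_bool card_ord.
have [->|qpos] := posnP q; first by rewrite leq0n.
move/(arith_core qpos) => hXY.
have h3 : (3 ^ (40 * q) <= 2 ^ (64 * q))%N.
  have -> : (40 * q = 5 * (8 * q))%N by lia.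
  have -> : (64 * q = 8 * (8 * q))%N by lia.
  exact: pow35.
have e1 : (2 ^ (40 * q) * 2 ^ (25 * q).+1 = 2 * 2 ^ (65 * q))%N.
  by rewrite -expnD -expnS; congr (_ ^ _); lia.
rewrite e1 in hXY.
move: hXY h3; set T := (2 ^ s)%N; generalize (3 ^ (40 * q))%N => E3 hXY h3.
have e2 : (2 ^ (65 * q) = 2 ^ q * 2 ^ (64 * q))%N by rewrite -expnD; congr (_ ^ _); lia.
rewrite e2 in hXY.
have h4 : (2 * 2 ^ q * 2 ^ (64 * q) <= 24 * T * 2 ^ (64 * q))%N.
  rewrite -mulnA -[X in (_ <= X)%N]mulnA; apply: (leq_trans hXY).
  by rewrite leq_mul2l leq_mul2l h3 !orbT.
rewrite leq_pmul2r ?expn_gt0 // in h4.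
have h5 : (2 ^ q <= 2 ^ (s + 4))%N.
  rewrite expnD -/T; have : (2 * 2 ^ q <= 2 * (12 * T))%N by rewrite mulnA.
  rewrite leq_pmul2l // => h6; apply: leq_trans h6 _.
  by rewrite mulnC leq_mul2l; apply/orP; right.
by rewrite leq_exp2l in h5.
Qed.
Local Open Scope ring_scope.

Lemma main (R : realFieldType) (eps : R) n s (Omega : finType) (p : Omega -> R)
  (A : salg R n.+1 s Omega) q :
  0 < eps -> (80 * q + 2)%:R * eps <= 1 -> (2 * (40 * q) <= n.+1)%N -> is_distr p ->
  (forall str : seq 'I_n.+1, (heavy str <= 1)%N -> succeeds_on A p eps str) ->
  (q <= s + 4)%N.
Proof.
move=> e0 hq hm [p0 p1] H.
set m := (40 * q)%N in hm *.
set a := (25 * q)%N.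
pose dec w (σ : bstate s) (i : 'I_m) := out A w (upd A w σ (bob n i)) <= (1 + eps) * m%:R.
pose g w (x : {ffun 'I_m -> bool}) := run A w (alice n x).
have hM : (80 * q + 2)%:R = 2 * m%:R + 2 :> R.
  have -> : (80 * q + 2 = 2 * m + 2)%N by rewrite /m; lia.
  by rewrite natrD natrM.
rewrite hM in hq.
have step1 : forall x i w, approx eps (F0 (strm n x i)) (out A w (run A w (strm n x i))) ->
    x i == dec w (g w x) i.
  move=> x i w; rewrite F0_strm // /run /strm foldl_cat /=.
  rewrite /dec /g /run; set o := out _ _ _; rewrite /approx.
  case: (x i) => /=; rewrite ?addn0 ?addn1.
    by case/andP => _ ->.
  case/andP => h1 _; rewrite eq_sym eqbF_neg -ltNge.
  apply: lt_le_trans h1; rewrite -addn1 natrD; nra.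
have step2 : forall (x : {ffun 'I_m -> bool}) (i : 'I_m), 2 / 3 <= \sum_w p w * (x i == dec w (g w x) i)%:R.
  move=> x i; apply: le_trans (H _ (heavy_strm x i hm)) _.
  rewrite /succeeds_on big_mkcond /=; apply: ler_sum => w _.
  case: ifP => [hP|_]; first by rewrite (step1 _ _ _ hP) mulr1.
  by rewrite mulr_ge0 // ler0n.
have step3 : (2 ^ m * m)%:R * (2 / 3) <=
    \sum_w p w * (\sum_x agree x (dec w (g w x)))%:R.
  have -> : \sum_w p w * (\sum_x agree x (dec w (g w x)))%:R =
      \sum_(x : {ffun 'I_m -> bool}) \sum_(i : 'I_m) \sum_w p w * (x i == dec w (g w x) i)%:R.
    rewrite (eq_bigr (fun w => \sum_(x : {ffun 'I_m -> bool}) \sum_(i : 'I_m) p w * (x i == dec w (g w x) i)%:R)).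
      rewrite exchange_big /=; apply: eq_bigr => x _; by rewrite exchange_big.
    move=> w _; rewrite natr_sum mulr_sumr; apply: eq_bigr => x _.
    by rewrite /agree natr_sum mulr_sumr.
  apply: le_trans (ler_sum _ (fun x _ => ler_sum _ (fun i _ => step2 x i))).
  by rewrite !sumr_const card_ffun card_bool !card_ord mulrC mulr_natr -mulrnA mulnC.
set B := (2 ^ a.+1 * a * 2 ^ m + m * #|{ffun 'I_s -> bool}| * 3 ^ m)%N.
have step4 : forall w, (2 ^ a.+1 * \sum_x agree x (dec w (g w x)) <= B)%N.
  move=> w; exact: (comb (S := {ffun 'I_s -> bool}) a (fun σ => dec w σ) (g w)).
have step5 : (2 ^ m * m)%:R * (2 / 3) * (2 ^ a.+1)%:R <= B%:R :> R.
  apply: le_trans (ler_wpM2r (ler0n _ _) step3) _.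
  rewrite mulr_suml.
  apply: le_trans (_ : _ <= \sum_w p w * B%:R) _.
    apply: ler_sum => w _; rewrite -mulrA -natrM mulnC.
    by apply: ler_wpM2l => //; rewrite ler_nat step4.
  by rewrite -mulr_suml p1 mul1r.
have : (2 * (2 ^ m * m) * 2 ^ a.+1 <= 3 * B)%N.
  rewrite -(ler_nat R) natrM [X in _ <= X]natrM natrM.
  move: step5; move: ((2 ^ m * m)%:R : R) ((2 ^ a.+1)%:R : R) (B%:R : R) => u v z h.
  have -> : 2%:R * u * v = 3 * (u * (2 / 3) * v) by field.
  by rewrite ler_pM2l.
exact: arith.
Qed.

Lemma heavy_uniq n (str : seq 'I_n) : uniq str -> heavy str = 0%N.
Proof.
move=> u; rewrite /heavy; apply/eqP; rewrite cards_eq0; apply/eqP/setP => k.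
by rewrite !inE /freq count_uniq_mem //; case: (k \in str).
Qed.

Lemma s_pos (R : realFieldType) (eps : R) n s (Omega : finType) (p : Omega -> R)
  (A : salg R n.+1 s Omega) :
  0 < eps -> eps < 1 -> is_distr p -> succeeds_on A p eps [::] -> succeeds_on A p eps [:: ord0] ->
  (0 < s)%N.
Proof.
case: s A => [|s] A //; move=> e0 e1 [p0 p1].
rewrite /succeeds_on !F0_seq.
have -> : #|([::] : seq 'I_n.+1)| = 0%N by rewrite (card_uniqP _).
have -> : #|[:: (ord0 : 'I_n.+1)]| = 1%N by rewrite (card_uniqP _).
have er : forall w, run A w [:: ord0] = run A w [::] by move=> w; apply/ffunP => -[].
move=> h0; rewrite (eq_bigl (fun w => approx eps 1 (out A w (run A w [::])))); last by move=> w; rewrite er.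
move=> h1.
have : \sum_(w | approx eps 0 (out A w (run A w [::]))) p w +
       \sum_(w | approx eps 1 (out A w (run A w [::]))) p w <= 1.
  rewrite -p1 !(big_mkcond (fun w => approx _ _ _)) -big_split /=.
  apply: ler_sum => w _.
  set o := out _ _ _.
  case h0w: (approx eps 0 o); case h1w: (approx eps 1 o) => /=.
  - exfalso; move: h0w h1w; rewrite /approx !mulr0 !mulr1 => /andP[_ a] /andP[b _]; lra.
  - by rewrite addr0.
  - by rewrite add0r.
  - by rewrite addr0.
lra.
Qed.

Lemma find_q (P : nat -> bool) N : P 0%N -> ~~ P N -> exists q, P q && ~~ P q.+1.
Proof.
elim: N => [->//|N IH] h0 hN.
case hP: (P N); first by exists N; rewrite hP.
by apply: IH => //; rewrite hP.
Qed.

Theorem theorem5p13 :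
  forall K : rat, 0 < K ->
  exists c : rat, 0 < c /\
  forall (R : realFieldType) (eps : R) (C n s : nat) (Omega : finType)
         (p : Omega -> R) (A : salg R n s Omega),
    0 < eps < 1 ->
    (1 <= C)%N ->
    C%:R <= ratr K / eps ->
    1 / eps <= n%:R ->
    is_distr p ->
    (forall str : seq 'I_n, (heavy str <= C)%N -> succeeds_on A p eps str) ->
    ratr c / eps <= s%:R.
Proof.
move=> K _; exists (1 / 500%:R); split; first by rewrite divr_gt0.
move=> R eps C n s Omega p A /andP[e0 e1] hC _ hn hp H.
have ec : ratr (1 / 500%:R : rat) = 1 / 500%:R :> R by rewrite fmorph_div rmorph1 rmorph_nat.
rewrite ec ler_pdivrMr //.
case: n A H hn => [|n] A H hn.
  by move: hn; rewrite ler_pdivrMr // mul0r ler10.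
have Hs : forall str, (heavy str <= 1)%N -> succeeds_on A p eps str.
  by move=> str h; apply: H; apply: leq_trans h hC.
have s1 : (0 < s)%N.
  apply: (s_pos e0 e1 hp); apply: Hs; rewrite heavy_uniq //.
have hn' : 1 <= n.+1%:R * eps by rewrite -ler_pdivrMr.
pose P q := (q == 0)%N || ((80 * q + 2)%:R * eps <= 1).
have [q /andP [Pq nPq]] : exists q, P q && ~~ P q.+1.
  apply: (find_q (N := n.+1)); first by [].
  rewrite /P /= -ltNge natrD natrM; have := ler0n R n.+1; nra.
move: nPq; rewrite /P /= -ltNge => nPq.
have s1R : 1 <= s%:R :> R by rewrite ler1n.
case: (posnP q) => [q0|qpos].
  move: nPq; rewrite q0 (_ : (80 * 1 + 2 = 82)%N) // => h; nra.
move: Pq; rewrite /P (gtn_eqF qpos) /= => Pq.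
have hm : (2 * (40 * q) <= n.+1)%N.
  rewrite -(ler_nat R); apply: le_trans hn.
  rewrite ler_pdivlMr //; apply: le_trans Pq.
  apply: ler_wpM2r; first exact: ltW.
  rewrite ler_nat; lia.
have := main e0 Pq hm hp Hs; rewrite -(ler_nat R) natrD => hqs.
move: nPq; rewrite (_ : (80 * q.+1 + 2 = 80 * q + 82)%N); last by lia.
rewrite natrD natrM => nPq.
have := ler0n R q; nra.
Qed.
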